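(* For every finite simple graph $G$, the non-cover complex $\mathcal{NC}(G)$ is $(|V(G)|-i\gamma_w(G)-1)$-collapsible.
   Context: $\mathcal{NC}(G)$ is the simplicial complex on $V(G)$ whose faces are the sets $W\subseteq V(G)$ such that $V(G)\setminus W$ contains both endpoints of some edge (if $G$ has no edges it is the void complex). For $A,W\subseteq V(G)$, $W$ weakly dominates $A$ if every $w\in A$ either lies in $W$ or has a neighbor in $W$; $\gamma_w(G;A)$ is the minimum size of a set weakly dominating $A$; the weak independent domination number is $i\gamma_w(G)=\max\{\gamma_w(G;I): I\text{ an independent set of }G\}$. A face of a simplicial complex $X$ is free if it lies in a unique facet; an elementary $d$-collapse deletes all faces containing a free face of size at most $d$; $X$ is $d$-collapsible if the void complex is reachable by finitely many elementary $d$-collapses. *)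

(* Defs.v *)
From HB Require Import structures.
From mathcomp Require Import all_boot all_order all_algebra.
Set Implicit Arguments. Unset Strict Implicit. Unset Printing Implicit Defensive.
Import Order.TTheory GRing.Theory Num.Theory.

(* A finite simple graph: vertex type T : finType with a symmetric,
   irreflexive adjacency relation e. *)

Section Defs.
Variable T : finType.

(* Non-cover complex NC(G): faces are W such that V \ W contains both
   endpoints of some edge.  (Void = empty family when G has no edges.) *)
Definition noncover_complex (e : rel T) : {set {set T}} :=
  [set W : {set T} | [exists x : T, [exists y : T,
      [&& x \notin W, y \notin W & e x y]]]].

Definition weakly_dominates (e : rel T) (W A : {set T}) : bool :=
  [forall w in A, (w \in W) || [exists u in W, e w u]].

(* gamma_w(G;A): minimum size of a set weakly dominating A
   ([set: T] always weakly dominates A). *)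
Definition gamma_w (e : rel T) (A : {set T}) : nat :=
  #|[arg min_(W < [set: T] | weakly_dominates e W A) #|W|]|.

Definition independent (e : rel T) (I : {set T}) : bool :=
  [forall x in I, forall y in I, ~~ e x y].

Definition i_gamma_w (e : rel T) : nat :=
  \max_(I : {set T} | independent e I) gamma_w e I.

Definition facet (X : {set {set T}}) (F : {set T}) : bool :=
  (F \in X) && [forall G in X, (F \subset G) ==> (G == F)].

Definition free_face (X : {set {set T}}) (s : {set T}) : bool :=
  (s \in X) && (#|[set F in X | facet X F & s \subset F]| == 1)%N.

Definition collapse (X : {set {set T}}) (s : {set T}) : {set {set T}} :=
  [set t in X | ~~ (s \subset t)].

Inductive d_collapsible (d : int) : {set {set T}} -> Prop :=
| dcol_void : d_collapsible d set0
| dcol_step (X : {set {set T}}) (s : {set T}) :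
    free_face X s -> (#|s|%:Z <= d)%R ->
    d_collapsible d (collapse X s) -> d_collapsible d X.

End Defs.

(* Main.v *)
Require Import Defs.
From HB Require Import structures.
From mathcomp Require Import all_boot all_order all_algebra zify.
Import Order.TTheory GRing.Theory Num.Theory.
Set Implicit Arguments. Unset Strict Implicit. Unset Printing Implicit Defensive.

Section Main.
Variable T : finType.
Implicit Types (X Y D : {set {set T}}) (s t W : {set T}).

Definition cone (v : T) Y : {set {set T}} := [set W : {set T} | (v \in W) && (W :\ v \in Y)].

Lemma setU1K' (v : T) t : v \notin t -> (v |: t) :\ v = t.
Proof. by move=> vt; apply/setP=> x; rewrite !inE; case: eqP => // ->; rewrite (negbTE vt). Qed.

Lemma facet_cone v Y D t : (forall u, u \in Y -> v \notin u) ->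
  (forall u, u \in D -> v \notin u) -> v \notin t ->
  facet (D :|: cone v Y) (v |: t) = facet Y t.
Proof.
move=> hY hD vt; rewrite /facet !inE eqxx /= setU1K' //.
have -> : (v |: t \in D) = false.
  by apply/negP => /hD; rewrite !inE eqxx.
case tY: (t \in Y) => //=.
apply/forallP/forallP => H G; apply/implyP => GI; apply/implyP => sub.
- have := H (v |: G); rewrite !inE eqxx /= setU1K' ?hY // GI orbT /= setUS //= => /eqP E.
  apply/eqP/setP=> x.
  case: (x =P v) => [->|/eqP xv]; first by rewrite (negbTE vt) (negbTE (hY _ GI)).
  by move/setP: E => /(_ x); rewrite !inE (negbTE xv).
- move: GI; rewrite !inE => /orP [/hD vG|/andP [vG GvY]].
    by move: sub => /subsetP /(_ v); rewrite !inE eqxx => /(_ isT); rewrite (negbTE vG).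
  have := H (G :\ v); rewrite GvY /= => H'.
  have : t \subset G :\ v.
    apply/subsetP => x xt; rewrite !inE; apply/andP; split.
      by apply/eqP=> xv; rewrite -xv xt in vt.
    by move/subsetP: sub; apply; rewrite !inE xt orbT.
  move=> tG; move: H'; rewrite tG => /eqP <-; apply/eqP/setP => x; rewrite !inE.
  by case: (x =P v) => [->|]; rewrite ?vG.
Qed.

Lemma sub_U1 (v : T) s W : v \in W -> v \notin s -> (v |: s \subset W) = (s \subset W :\ v).
Proof.
move=> vW vs; rewrite subsetD1 vs andbT.
apply/idP/idP => H.
  by apply: subset_trans H; apply/subsetP => x xs; rewrite !inE xs orbT.
by apply/subsetP => x; rewrite !inE => /orP [/eqP ->//|]; move/subsetP: H; apply.
Qed.

Lemma collapse_cone v Y D s : (forall u, u \in D -> v \notin u) -> v \notin s ->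
  collapse (D :|: cone v Y) (v |: s) = D :|: cone v (collapse Y s).
Proof.
move=> hD vs; apply/setP => W; rewrite /collapse /cone !inE.
case WD: (W \in D) => /=.
  have vW := hD _ WD.
  apply/negP => /subsetP /(_ v); rewrite !inE eqxx => /(_ isT) H.
  by rewrite H in vW.
case vW: (v \in W) => //=.
by rewrite sub_U1 // andbC.
Qed.

Lemma free_cone v Y D s : (forall u, u \in Y -> v \notin u) ->
  (forall u, u \in D -> v \notin u) -> v \notin s -> free_face Y s ->
  free_face (D :|: cone v Y) (v |: s).
Proof.
move=> hY hD vs /andP [sY /cards1P [t0 E]].
have : t0 \in [set F in Y | facet Y F & s \subset F] by rewrite E set11.
rewrite inE => /and3P [t0Y ft0 st0].
have vt0 := hY _ t0Y.
apply/andP; split.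
  by rewrite !inE eqxx /= setU1K' // sY orbT.
apply/cards1P; exists (v |: t0); apply/setP => F; rewrite !inE.
apply/idP/idP.
- move=> /and3P [FX fF sF].
  have vF : v \in F by move/subsetP: sF; apply; rewrite !inE eqxx.
  have FD : F \notin D by apply/negP => /hD; rewrite vF.
  move: FX; rewrite (negbTE FD) vF /= => FvY.
  have FE : F = v |: (F :\ v).
    by apply/setP => x; rewrite !inE; case: (x =P v) => // ->.
  rewrite FE in fF.
  rewrite facet_cone // in fF; last by rewrite !inE eqxx.
  have : F :\ v \in [set F in Y | facet Y F & s \subset F].
    by rewrite !inE FvY fF -sub_U1.
  rewrite E inE => /eqP <-; apply/eqP; exact: FE.
- move=> /eqP ->; rewrite facet_cone // ?inE ?eqxx ?setU1K' // t0Y ft0 orbT /=.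
  by rewrite setUS.
Qed.

Lemma cone_collapsible (d : int) v Y : d_collapsible d Y ->
  (forall u, u \in Y -> v \notin u) ->
  forall D, (forall u, u \in D -> v \notin u) -> d_collapsible (d + 1) D ->
  d_collapsible (d + 1) (D :|: cone v Y).
Proof.
elim=> [|X s fs sd _ IH] hY D hD cD.
  have -> : cone v set0 = set0 by apply/setP => W; rewrite !inE andbF.
  by rewrite setU0.
have vs : v \notin s.
  by move: fs => /andP [/hY].
apply: (@dcol_step _ _ _ (v |: s)).
- exact: free_cone.
- rewrite cardsU1 vs. lia.
rewrite collapse_cone //; apply: IH => // u; rewrite inE => /andP [uX _]; exact: hY.
Qed.

Lemma simplex_coll (V : {set T}) (d : int) : (0 <= d)%R -> d_collapsible d (powerset V).
Proof.
move=> d0; apply: (@dcol_step _ _ _ set0).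
- rewrite /free_face !inE sub0set /=; apply/cards1P; exists V; apply/setP => F.
  rewrite !inE sub0set andbT /facet !inE.
  apply/idP/idP.
  + move=> /and3P [FV _ /forallP /(_ V)]; rewrite !inE subxx FV /= => /eqP ->; by [].
  + move=> /eqP ->; rewrite subxx /=; apply/forallP => G; rewrite !inE.
    by apply/implyP => GV; apply/implyP => VG; rewrite eqEsubset GV VG.
- by rewrite cards0.
- have -> : collapse (powerset V) set0 = set0.
    by apply/setP => W; rewrite !inE sub0set andbF.
  exact: dcol_void.
Qed.

End Main.

Section Graph.
Variable T : finType.
Variable e : rel T.
Hypothesis e_sym : symmetric e.
Hypothesis e_irr : irreflexive e.

Definition Xc (V L : {set T}) : {set {set T}} :=
  [set W : {set T} | (W \subset V) &&
    ([exists x in L, x \in V :\: W] || [exists x in V :\: W, exists y in V :\: W, e x y])].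

Definition domL (L W I : {set T}) : bool :=
  [forall a in I, [|| a \in W, a \in L | [exists u in W, e a u]]].

Lemma decomp (V L : {set T}) v : v \in V ->
  Xc V L = (if v \in L then powerset (V :\ v) else Xc (V :\ v) (L :|: [set y | e v y]))
           :|: cone v (Xc (V :\ v) L).
Proof.
move=> vV; apply/setP => W; rewrite /cone !inE.
case vW: (v \in W).
- have E : (V :\ v) :\: (W :\ v) = V :\: W.
    apply/setP => x; rewrite !inE; case: (x =P v) => [->|]; by rewrite ?vW.
  have -> : (W \in (if v \in L then powerset (V :\ v)
             else Xc (V :\ v) (L :|: [set y | e v y]))) = false.
    by case: (v \in L); rewrite !inE subsetD1 vW /= ?andbF.
  have sE : (W :\ v \subset V :\ v) = (W \subset V).
    apply/idP/idP => H.
      apply/subsetP => x xW; case: (x =P v) => [->//|/eqP xv].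
      by move/subsetP: H => /(_ x); rewrite !inE xv xW => /(_ isT) /andP [].
    by apply/subsetP => x; rewrite !inE => /andP [-> xW]; move/subsetP: H; apply.
  by rewrite /= E sE.
- rewrite /= orbF.
  have E : V :\: W = v |: ((V :\ v) :\: W).
    apply/setP => x; rewrite !inE; case: (x =P v) => [->|]; by rewrite ?vW ?vV.
  have sW : (W \subset V :\ v) = (W \subset V) by rewrite subsetD1 vW andbT.
  case vL: (v \in L).
  + rewrite !inE sW; case: (W \subset V) => //=.
    apply/orP; left; apply/existsP; exists v; by rewrite vL E !inE eqxx.
  + rewrite !inE sW E; case: (W \subset V) => //=.
    apply/idP/idP.
    * move=> /orP [/existsP [x /andP [xL]]|/existsP [x /andP [xS /existsP [y /andP [yS exy]]]]].
        rewrite !inE => /orP [/eqP xv|xS]; first by rewrite xv vL in xL.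
        by apply/orP; left; apply/existsP; exists x; rewrite !inE xL xS.
      move: xS yS; rewrite !in_setU1 => /orP [/eqP xv|xS] /orP [/eqP yv|yS].
      -- by move: exy; rewrite xv yv e_irr.
      -- by apply/orP; left; apply/existsP; exists y; rewrite yS andbT !inE -xv exy orbT.
      -- by apply/orP; left; apply/existsP; exists x; rewrite xS andbT !inE -yv e_sym exy orbT.
      -- apply/orP; right; apply/existsP; exists x; apply/andP; split => //; apply/existsP; exists y; apply/andP; split => //.
    * move=> /orP [/existsP [x /andP [xL xS]]|/existsP [x /andP [xS /existsP [y /andP [yS exy]]]]].
        move: xL; rewrite !inE => /orP [xL|exv].
          by apply/orP; left; apply/existsP; exists x; rewrite xL in_setU1 xS orbT.
        apply/orP; right; apply/existsP; exists v; rewrite in_setU1 eqxx /=.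
        by apply/existsP; exists x; rewrite in_setU1 xS orbT.
      apply/orP; right; apply/existsP; exists x; rewrite in_setU1 xS orbT /=.
      by apply/existsP; exists y; rewrite in_setU1 yS orbT.
Qed.

Lemma indep_sub (I J : {set T}) : J \subset I -> independent e I -> independent e J.
Proof.
move=> JI /forallP H; apply/forallP => x; apply/implyP => xJ; apply/forallP => y; apply/implyP => yJ.
have := H x; rewrite (subsetP JI _ xJ) /= => /forallP /(_ y); by rewrite (subsetP JI _ yJ).
Qed.

Lemma Xc_void (V L I : {set T}) : V \subset I -> [disjoint I & L] -> independent e I -> Xc V L = set0.
Proof.
move=> VI IL indI; apply/setP => W; rewrite !inE; apply/negP => /andP [_ /orP [/existsP [x /andP [xL xVW]]|/existsP [x /andP [xVW /existsP [y /andP [yVW exy]]]]]].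
  move: xVW; rewrite inE => /andP [_ xV].
  by rewrite (disjointFr IL (subsetP VI _ xV)) in xL.
move: xVW yVW; rewrite !inE => /andP [_ xV] /andP [_ yV].
move: indI => /forallP /(_ x); rewrite (subsetP VI _ xV) /= => /forallP /(_ y).
by rewrite (subsetP VI _ yV) exy.
Qed.

Lemma main n : forall (V L : {set T}) (d : int), #|V| = n ->
  (exists I : {set T}, [/\ I \subset V, [disjoint I & L], independent e I &
     forall W, domL L W I -> (#|V|%:Z - 1 - d <= #|W|%:Z)%R]) ->
  d_collapsible d (Xc V L).
Proof.
elim: n => [|n IH] V L d hV [I [IV IL indI hW]].
  have VI : V \subset I by move/eqP: hV; rewrite cards_eq0 => /eqP ->; rewrite sub0set.
  rewrite (Xc_void VI IL indI); exact: dcol_void.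
case: (boolP (V \subset I)) => [VI|/subsetPn [v vV vI]].
  rewrite (Xc_void VI IL indI); exact: dcol_void.
have hVv : #|V :\ v| = n by move: hV; rewrite (cardsD1 v) vV; case.
have IVv : I \subset V :\ v.
  by apply/subsetP => x xI; rewrite !inE (subsetP IV _ xI) andbT; apply/eqP => xv; rewrite -xv xI in vI.
rewrite (decomp L vV) -(subrK 1%R d).
apply: cone_collapsible.
- apply: IH => //; exists I; split => // W dW.
  have := hW W dW; rewrite hV hVv; lia.
- by move=> u; rewrite inE => /andP [uV _]; apply/negP => /(subsetP uV); rewrite !inE eqxx.
- case: (v \in L) => u; rewrite inE.
    by move=> uV; apply/negP => /(subsetP uV); rewrite !inE eqxx.
  by move=> /andP [uV _]; apply/negP => /(subsetP uV); rewrite !inE eqxx.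
rewrite subrK; case vL: (v \in L).
  apply: simplex_coll.
  have dI : domL L I I by apply/forallP => a; apply/implyP => ->.
  have := hW I dI; have := subset_leq_card IVv; rewrite hV hVv; lia.
apply: IH => //; exists (I :\: [set y | e v y]); split.
- by apply: subset_trans IVv; apply: subsetDl.
- rewrite -setI_eq0; apply/eqP/setP => x; rewrite !inE.
  case xI: (x \in I); rewrite ?andbF //= andbT.
  case evx: (e v x) => //=; rewrite orbF; exact: (disjointFr IL xI).
- apply: indep_sub indI; exact: subsetDl.
- move=> W dW.
  have dW' : domL L (v |: W) I.
    apply/forallP => a; apply/implyP => aI.
    case eva: (e v a).
      by apply/orP; right; apply/orP; right; apply/existsP; exists v; rewrite !inE eqxx e_sym eva.
    move: dW => /forallP /(_ a); rewrite !inE eva aI orbF /= => /or3P [aW|aL|/existsP [u /andP [uW eau]]].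
    + by rewrite aW orbT.
    + by rewrite aL orbT.
    + by apply/orP; right; apply/orP; right; apply/existsP; exists u; rewrite !inE uW eau orbT.
  have := hW _ dW'; have := cardsU1 v W; rewrite hV hVv; lia.
Qed.

End Graph.

Theorem corollary3p1 (T : finType) (e : rel T)
    (e_sym : symmetric e) (e_irr : irreflexive e) :
  d_collapsible (#|T|%:Z - (i_gamma_w e)%:Z - 1)%R (noncover_complex e).
have -> : noncover_complex e = Xc e [set: T] set0.
  apply/setP => W; rewrite !inE subsetT /=.
  have -> : [exists x in set0, x \in [set: T] :\: W] = false.
    by apply/existsP => [[x]]; rewrite inE.
  rewrite /=; apply/idP/idP.
    move=> /existsP [x /existsP [y /and3P [xW yW exy]]].
    apply/existsP; exists x; apply/andP; split; first by rewrite !inE xW.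
    by apply/existsP; exists y; rewrite !inE yW.
  move=> /existsP [x /andP [xW /existsP [y /andP [yW exy]]]].
  by apply/existsP; exists x; apply/existsP; exists y; move: xW yW; rewrite !inE !andbT => -> ->.
have [I0 I0ind E] : {I0 : {set T} | independent e I0 & i_gamma_w e = gamma_w e I0}.
  apply: eq_bigmax_cond.
  apply/card_gt0P; exists set0; rewrite unfold_in; apply/forallP => x; by rewrite inE.
apply: (main e_sym e_irr (erefl _)); exists I0; split; [exact: subsetT | by rewrite -setI_eq0 setI0 | exact: I0ind | ].
move=> W dW.
have wd : weakly_dominates e W I0.
  apply/forallP => a; apply/implyP => aI; move: dW => /forallP /(_ a); rewrite aI inE /=.
  by [].
rewrite E cardsT.
suff : gamma_w e I0 <= #|W| by lia.
rewrite /gamma_w; case: arg_minnP.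
  by apply/forallP => a; apply/implyP => _; rewrite in_setT.
by move=> W0 _ /(_ W wd).
Qed.
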